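(* There is an absolute constant $C$ such that the following holds. Let $G=(V,E)$ be an undirected unweighted graph on $n$ vertices, let $D\ge1$ be an integer, and let $\chi:V\to[1,D^3]$ be any coloring. For vertices $u,v$ let $H_{uv}=\{x\in V:\mathrm{dist}(u,x)+\mathrm{dist}(x,v)=\mathrm{dist}(u,v)\}$. For integers $a,b\ge0$ with $1\le a+b\le D$ and $h\in V$, let $E^h_{a,b}$ be the edge set of the bipartite graph with two copies of $V$ as sides, where $(u,v)\in E^h_{a,b}$ ($u$ in the left copy, $v$ in the right copy) iff (i) $|H_{uv}|\le D$, (ii) the vertices of $H_{uv}$ receive pairwise distinct colors under $\chi$, and (iii) $h\in H_{uv}$, $\mathrm{dist}(u,h)=a$ and $\mathrm{dist}(h,v)=b$. For each such $(a,b,h)$ fix a minimum vertex cover $(V^{h}_{1,a,b},V^{h}_{2,a,b})$ of this bipartite graph ($V^h_{1,a,b}$ in the left copy, $V^h_{2,a,b}$ in the right copy), and define for each $v\in V$ the set $F_v$ of all $h\in V$ such that $v\in V^h_{1,a,b}\cup V^h_{2,a,b}$ for some $a,b$ with $1\le a+b\le D$. Then $$\sum_{v\in V}|F_v|\le C\,D^5\,\frac{n^2}{\mathsf{RS}(n)}.$$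
   Context: A matching $M$ in a graph is induced if there is a vertex subset $V'$ such that $M$ is exactly the edge set of the subgraph induced by $V'$. A Ruzsa–Szemerédi graph is an undirected unweighted graph on $n$ vertices whose edges can be partitioned into at most $n$ induced matchings; $\mathsf{RS}(n)$ is the largest value such that every Ruzsa–Szemerédi graph on $n$ vertices has at most $n^2/\mathsf{RS}(n)$ edges. *)

(* Defs.v *)
From HB Require Import structures.
From mathcomp Require Import all_boot all_order all_algebra.
Set Implicit Arguments. Unset Strict Implicit. Unset Printing Implicit Defensive.
Import Order.TTheory GRing.Theory Num.Theory.

Section Dist.
Variables (T : finType) (e : rel T).

Definition walk_len (u v : T) (k : nat) : bool :=
  [exists p : k.-tuple T, path e u p && (last u p == v)].

(* shortest-path distance; None encodes infinity (no path).
   A shortest walk has fewer than #|T| edges. *)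
Definition dist (u v : T) : option nat :=
  let k := find (walk_len u v) (iota 0 #|T|) in
  if k < #|T| then Some k else None.

Definition oadd (x y : option nat) : option nat :=
  match x, y with Some a, Some b => Some (a + b) | _, _ => None end.

Definition Hset (u v : T) : {set T} :=
  [set x | oadd (dist u x) (dist x v) == dist u v].

(* bipartite edge set E^h_{a,b}, u in left copy, v in right copy *)
Definition Eab (D : nat) (chi : T -> nat) (a b : nat) (h : T) (u v : T) : bool :=
  [&& #|Hset u v| <= D,
      [forall x in Hset u v, forall y in Hset u v, (chi x == chi y) ==> (x == y)],
      h \in Hset u v, dist u h == Some a & dist h v == Some b].

Definition is_vcover (E : T -> T -> bool) (C : {set T} * {set T}) : bool :=
  [forall u, forall v, E u v ==> ((u \in C.1) || (v \in C.2))].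

Definition is_min_vcover (E : T -> T -> bool) (C : {set T} * {set T}) : Prop :=
  is_vcover E C /\
  forall C' : {set T} * {set T}, is_vcover E C' -> #|C.1| + #|C.2| <= #|C'.1| + #|C'.2|.

Definition Fset (D : nat) (cover : nat -> nat -> T -> {set T} * {set T}) (v : T)
  : {set T} :=
  [set h | [exists a : 'I_D.+1, exists b : 'I_D.+1,
             (1 <= a + b <= D) && (v \in (cover a b h).1 :|: (cover a b h).2)]].
End Dist.

(* A simple graph on vertex set 'I_n is given by its edge set E, a set of
   2-element subsets of 'I_n. *)
Definition is_matching n (M : {set {set 'I_n}}) : bool :=
  [forall f in M, forall g in M, (f != g) ==> [disjoint f & g]].

Definition is_induced_matching n (E M : {set {set 'I_n}}) : bool :=
  is_matching M && [exists V' : {set 'I_n}, M == [set f in E | f \subset V']].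

(* E can be partitioned into at most n induced matchings (empty classes allowed) *)
Definition is_RS_graph n (E : {set {set 'I_n}}) : bool :=
  [forall f in E, #|f| == 2] &&
  [exists Ms : {ffun 'I_n -> {set {set 'I_n}}},
     [&& [forall i, is_induced_matching E (Ms i)],
         E == \bigcup_i Ms i &
         [forall i, forall j, (i != j) ==> [disjoint Ms i & Ms j]]]].

Definition rs_max (n : nat) : nat :=
  \max_(E : {set {set 'I_n}} | is_RS_graph E) #|E|.

(* RS(n): the largest value such that every RS graph on n vertices has at most
   n^2/RS(n) edges, i.e. RS(n) = n^2 / rs_max n. *)
Definition RS (n : nat) : rat := (n ^ 2)%:R / (rs_max n)%:R.

(* Main.v *)
Require Import Defs.
From HB Require Import structures.
From mathcomp Require Import all_boot all_order all_algebra.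
From mathcomp Require Import ring.

Module Helpers.
Set Implicit Arguments. Unset Strict Implicit. Unset Printing Implicit Defensive.

Lemma exists_le_sum (I : finType) (P : pred I) : [exists i, P i] <= \sum_i P i.
Proof.
case: existsP => [[i Pi]|] //; by rewrite (bigD1 i) //= Pi.
Qed.

Lemma sum_disj_card (I T : finType) (F : I -> {set T}) :
  (forall i j x, x \in F i -> x \in F j -> i = j) ->
  \sum_i #|F i| <= #|\bigcup_i F i|.
Proof.
move=> Hd.
rewrite (eq_bigr (fun i => \sum_x (x \in F i))); last by move=> i _; rewrite -sum1_card big_mkcond.
rewrite exchange_big /= -sum1_card [X in _ <= X]big_mkcond /=.
apply: leq_sum => x _.
case: (boolP [exists i, x \in F i]) => [/existsP[i xi]|/existsPn nx].
  rewrite (bigD1 i) //= xi big1 ?addn0.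
    by rewrite (_ : x \in _) //; apply/bigcupP; exists i.
  by move=> j /negbTE ji; case: (boolP (x \in F j)) => // xj; rewrite (Hd _ _ _ xi xj) eqxx in ji.
by rewrite big1 // => i _; rewrite (negbTE (nx i)).
Qed.

Lemma card_split (T : finType) (x y : T) : x != y ->
  #|[set S : {set T} | (x \in S) && (y \notin S)]| = 2 ^ (#|T| - 2).
Proof.
move=> xy.
have -> : [set S : {set T} | (x \in S) && (y \notin S)] =
   (fun A => x |: A) @: powerset (~: [set x; y]).
  apply/setP => S; rewrite inE; apply/andP/imsetP.
    case=> xS yS; exists (S :\: [set x; y]).
      by rewrite powersetE; apply/subsetP => z; rewrite !inE => /andP[].
    apply/setP => z; rewrite !inE; case: (eqVneq z x) => [->|zx] //=.
    by case: (eqVneq z y) => [->|zy] //=; rewrite (negbTE yS).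
  case=> A; rewrite powersetE => /subsetP sA ->; split; first by rewrite setU11.
  rewrite !inE negb_or eq_sym xy /=; apply/negP => yA.
  by have := sA _ yA; rewrite !inE eqxx orbT.
rewrite card_in_imset ?card_powerset.
  by rewrite -(cardsC [set x; y]) cards2 xy addKn.
move=> A B; rewrite !powersetE => /subsetP sA /subsetP sB eAB.
apply/setP => z; case: (eqVneq z x) => [->|zx].
  have xA : x \notin A by apply/negP => /sA; rewrite !inE eqxx.
  have xB : x \notin B by apply/negP => /sB; rewrite !inE eqxx.
  by rewrite (negbTE xA) (negbTE xB).
by move/setP: eAB => /(_ z); rewrite !inE (negbTE zx).
Qed.

Lemma card_sets (T : finType) : #|{set T}| = 2 ^ #|T|.
Proof. have := card_powerset [set: T]; rewrite powersetT !cardsT; exact. Qed.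

Lemma disjP (T : finType) (A B : {set T}) :
  (forall x, x \in A -> x \in B -> False) -> [disjoint A & B].
Proof.
move=> H; rewrite disjoints_subset; apply/subsetP => x xA; rewrite inE.
by apply/negP => xB; apply: H xA xB.
Qed.

Lemma rs_le n (E : {set {set 'I_n}}) : is_RS_graph E -> #|E| <= rs_max n.
Proof. by move=> HE; rewrite /rs_max (bigD1 E) //= leq_maxl. Qed.

Lemma oriented (T : finType) (M : T -> {set T * T})
  (Hmatch : forall h p q, p \in M h -> q \in M h -> (p.1 = q.1 \/ p.2 = q.2) -> p = q)
  (Hkey : forall h h' p q r, p \in M h -> q \in M h -> r \in M h' ->
  r.1 = p.1 -> r.2 = q.2 -> h' = h) (S : {set T}) :
  (forall h p, p \in M h -> (p.1 \in S) && (p.2 \notin S)) ->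
  \sum_h #|M h| <= rs_max #|T|.
Proof.
move=> Hor.
pose rk := @enum_rank T.
pose ed (p : T * T) : {set 'I_#|T|} := [set rk p.1; rk p.2].
have rkE : forall x y, (rk x == rk y) = (x == y) by move=> x y; apply: inj_eq; apply: enum_rank_inj.
have ori : forall h p x, p \in M h -> x \in S -> x = p.2 -> False.
  by move=> h p x /Hor /andP[_ np] xS ex; rewrite -ex xS in np.
have ori2 : forall h p x, p \in M h -> x \notin S -> x = p.1 -> False.
  by move=> h p x /Hor /andP[ps _] xS ex; rewrite -ex (negbTE xS) in ps.
have edinj : forall h h' p q, p \in M h -> q \in M h' -> ed p = ed q -> p = q.
  move=> h h' [p1 p2] [q1 q2] pM qM e.
  have /andP[p1S p2S] := Hor _ _ pM.
  have h1 : rk p1 \in ed (q1, q2) by rewrite -e !inE eqxx.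
  have h2 : rk p2 \in ed (q1, q2) by rewrite -e !inE eqxx orbT.
  move: h1 h2; rewrite !inE !rkE /= => /orP[/eqP e1|/eqP e1].
    move=> /orP[/eqP e2|/eqP e2]; first by exfalso; apply: (ori2 _ _ _ qM p2S); rewrite e2.
    by rewrite e1 e2.
  by exfalso; apply: (ori _ _ _ qM p1S); rewrite e1.
pose Ms := [ffun i : 'I_#|T| => ed @: M (enum_val i)].
pose E := \bigcup_i Ms i.
have disjMs : forall i j f, f \in Ms i -> f \in Ms j -> i = j.
  move=> i j f; rewrite !ffunE => /imsetP[p pM ->] /imsetP[q qM e].
  have epq := edinj _ _ _ _ pM qM e; subst q.
  by apply: (can_inj (@enum_valK T)); exact: esym (Hkey _ _ _ _ _ pM pM qM erefl erefl).
have cardE : \sum_h #|M h| <= #|E|.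
  rewrite (reindex (@enum_val T T)) /=; last first.
    by exists (@enum_rank T) => x _; [apply: enum_valK | apply: enum_rankK].
  have H := sum_disj_card disjMs.
  apply: leq_trans H; apply: eq_leq; apply: eq_bigr => i _.
  rewrite ffunE card_in_imset //.
  move=> p q pM qM e; exact: (edinj _ _ _ _ pM qM e).
apply: leq_trans cardE _.
apply: rs_le.
apply/andP; split.
  apply/forallP => f; apply/implyP => /bigcupP[i _]; rewrite ffunE => /imsetP[p pM ->].
  rewrite cards2 rkE; have /andP[p1S p2S] := Hor _ _ pM.
  suff -> : (p.1 == p.2) = false by []. by apply/negP => /eqP e; rewrite -e p1S in p2S.
apply/existsP; exists Ms; apply/and3P; split; last first.
- apply/forallP => i; apply/forallP => j; apply/implyP => ij.
  by apply: disjP => f fi fj; rewrite (disjMs _ _ _ fi fj) eqxx in ij.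
- by [].
apply/forallP => i; apply/andP; split.
  apply/forallP => f; apply/implyP => fM; apply/forallP => g; apply/implyP => gM.
  apply/implyP => fg.
  move: fM gM fg; rewrite !ffunE => /imsetP[p pM ->] /imsetP[q qM ->] fg.
  have pq : p <> q by move=> e; rewrite e eqxx in fg.
  have /andP[p1S p2S] := Hor _ _ pM; have /andP[q1S q2S] := Hor _ _ qM.
  apply: disjP => x; rewrite !inE => /orP[] /eqP -> /orP[] /eqP /enum_rank_inj e.
  + by apply: pq; apply: (Hmatch _ _ _ pM qM); left.
  + by apply: (ori _ _ _ qM p1S).
  + by apply: (ori2 _ _ _ qM p2S).
  + by apply: pq; apply: (Hmatch _ _ _ pM qM); right.
apply/existsP; exists (\bigcup_(f in Ms i) f); apply/eqP/setP => f; rewrite inE.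
apply/idP/andP.
  move=> fM; split; first by apply/bigcupP; exists i.
  by apply/subsetP => x xf; apply/bigcupP; exists f.
case=> /bigcupP[j _]; rewrite ffunE => /imsetP[r rM ->] /subsetP fsub.
have /andP[r1S r2S] := Hor _ _ rM.
have := fsub (rk r.1); rewrite !inE eqxx => /(_ isT) /bigcupP[g]; rewrite ffunE.
move=> /imsetP[p pM ->]; rewrite !inE !rkE => /orP[/eqP e1|/eqP e1]; last first.
  by exfalso; apply: (ori _ _ _ pM r1S).
have := fsub (rk r.2); rewrite !inE eqxx orbT => /(_ isT) /bigcupP[g']; rewrite ffunE.
move=> /imsetP[q qM ->]; rewrite !inE !rkE => /orP[/eqP e2|/eqP e2].
  by exfalso; apply: (ori2 _ _ _ qM r2S).
have ej := Hkey _ _ _ _ _ pM qM rM e1 e2.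
by apply/imsetP; exists r; rewrite // -ej.
Qed.

Lemma card_predE (X : finType) (P : pred X) : #|[set p | P p]| = \sum_p P p.
Proof. rewrite -sum1_card big_mkcond; apply: eq_bigr => p _; rewrite inE; by case: (P p). Qed.

Lemma card_sepE (X : finType) (A : {set X}) (P : pred X) :
  #|[set p in A | P p]| = \sum_(p in A) P p.
Proof.
rewrite -sum1_card big_mkcond [RHS]big_mkcond; apply: eq_bigr => p _; rewrite !inE.
by case: (p \in A); case: (P p).
Qed.

Lemma gen4 (T : finType) (M : T -> {set T * T})
  (Hmatch : forall h p q, p \in M h -> q \in M h -> (p.1 = q.1 \/ p.2 = q.2) -> p = q)
  (Hkey : forall h h' p q r, p \in M h -> q \in M h -> r \in M h' ->
  r.1 = p.1 -> r.2 = q.2 -> h' = h)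
  (Hneq : forall h p, p \in M h -> p.1 != p.2) : \sum_h #|M h| <= 4 * rs_max #|T|.
Proof.
case: (ltnP 1 #|T|) => n2; last first.
  rewrite big1 // => h _; apply/eqP; rewrite cards_eq0; apply/eqP/setP => p.
  rewrite inE; apply/negP => pM.
  have := max_card (mem [set p.1; p.2]); rewrite cards2 (Hneq _ _ pM).
  by move=> H; have := leq_trans H n2.
pose P (S : {set T}) (p : T * T) := (p.1 \in S) && (p.2 \notin S).
pose MS (S : {set T}) h := [set p in M h | P S p].
have bnd : forall S, \sum_h #|MS S h| <= rs_max #|T|.
  move=> S.
  have H1 : forall h p q, p \in MS S h -> q \in MS S h -> (p.1 = q.1 \/ p.2 = q.2) -> p = q.
    move=> h p q; rewrite !inE => /andP[pM _] /andP[qM _]; move=> H; exact: (Hmatch _ _ _ pM qM H).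
  have H2 : forall h h' p q r, p \in MS S h -> q \in MS S h -> r \in MS S h' ->
      r.1 = p.1 -> r.2 = q.2 -> h' = h.
    move=> h h' p q r; rewrite !inE => /andP[pM _] /andP[qM _] /andP[rM _]; exact: Hkey.
  apply: (oriented H1 H2).
  move=> h p; rewrite !inE => /andP[_ H]; exact: H.
have tot : \sum_(S : {set T}) \sum_h #|MS S h| <= 2 ^ #|T| * rs_max #|T|.
  apply: (@leq_trans (\sum_(S : {set T}) rs_max #|T|)); first by apply: leq_sum => S _; exact: bnd.
  by rewrite sum_nat_const card_sets.
have eqS : \sum_(S : {set T}) \sum_h #|MS S h| = (\sum_h #|M h|) * 2 ^ (#|T| - 2).
  rewrite exchange_big big_distrl /=; apply: eq_bigr => h _.
  under eq_bigr do rewrite /MS card_sepE.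
  rewrite exchange_big /= -sum_nat_const; apply: eq_bigr => p pM.
  by rewrite -card_predE card_split // (Hneq _ _ pM).
move: tot; rewrite eqS.
have -> : 2 ^ #|T| = 4 * 2 ^ (#|T| - 2) by rewrite -(subnK n2) expnD addnK mulnC.
by rewrite mulnAC (mulnC 4) leq_pmul2r ?expn_gt0.
Qed.

Definition bmatch (T : finType) (R : T -> T -> bool) (M : {set T * T}) : bool :=
  [forall p in M, R p.1 p.2] &&
  [forall p in M, forall q in M, ((p.1 == q.1) || (p.2 == q.2)) ==> (p == q)].

Lemma bmatch0 (T : finType) (R : T -> T -> bool) : bmatch R set0.
Proof. by apply/andP; split; apply/forallP => p; rewrite inE. Qed.

Definition Mx (T : finType) (R : T -> T -> bool) : {set T * T} :=
  arg_max set0 (bmatch R) (fun M => #|M|).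

Lemma Mx_bm (T : finType) (R : T -> T -> bool) : bmatch R (Mx R).
Proof. by rewrite /Mx; case: arg_maxnP => //; apply: bmatch0. Qed.

Lemma bm_rel (T : finType) (R : T -> T -> bool) M p : bmatch R M -> p \in M -> R p.1 p.2.
Proof. by case/andP => /forallP /(_ p) /implyP H _ /H. Qed.

Lemma bm_match (T : finType) (R : T -> T -> bool) M p q : bmatch R M -> p \in M -> q \in M ->
  (p.1 = q.1 \/ p.2 = q.2) -> p = q.
Proof.
case/andP => _ /forallP /(_ p) /implyP H pM qM e.
have /forallP /(_ q) /implyP H2 := H pM.
apply/eqP; move/implyP: (H2 qM); apply; case: e => ->; by rewrite eqxx ?orbT.
Qed.

Lemma Mx_cover (T : finType) (R : T -> T -> bool) C :
  is_min_vcover R C -> #|C.1| + #|C.2| <= 2 * #|Mx R|.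
Proof.
case=> _ Cmin; rewrite /Mx; case: arg_maxnP; first exact: bmatch0.
move=> M bM maxM.
pose Cv := ([set p.1 | p in M], [set p.2 | p in M]).
have : is_vcover R Cv.
  apply/forallP => u; apply/forallP => v; apply/implyP => Ruv.
  apply/negPn/negP => /norP[nu nv].
  have nM : (u, v) \notin M by apply: contra nu => uvM; apply/imsetP; exists (u, v).
  have bM' : bmatch R ((u, v) |: M).
    apply/andP; split; apply/forallP => p; apply/implyP; rewrite !inE => /orP[/eqP ->|pM].
    - by [].
    - exact: bm_rel bM pM.
    - apply/forallP => q; apply/implyP; rewrite !inE => /orP[/eqP ->|qM]; first by rewrite !eqxx.
      apply/implyP => /orP[/eqP e|/eqP e].
        by exfalso; move/negP: nu; apply; apply/imsetP; exists q; rewrite // -e.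
      by exfalso; move/negP: nv; apply; apply/imsetP; exists q; rewrite // -e.
    - apply/forallP => q; apply/implyP; rewrite !inE => /orP[/eqP ->|qM].
        apply/implyP => /orP[/eqP e|/eqP e].
          by exfalso; move/negP: nu; apply; apply/imsetP; exists p; rewrite // e.
        by exfalso; move/negP: nv; apply; apply/imsetP; exists p; rewrite // e.
      apply/implyP => H; apply/eqP; apply: (bm_match bM pM qM).
      by case/orP: H => /eqP e; [left|right].
  have := maxM _ bM'; rewrite cardsU1 nM /=.
  by rewrite ltnn.
move=> /Cmin H; apply: leq_trans H _.
by rewrite mul2n -addnn leq_add // leq_imset_card.
Qed.

Lemma dist_refl (T : finType) (e : rel T) u : dist e u u = Some 0.
Proof.
have w0 : walk_len e u u 0 by apply/existsP; exists [tuple]; rewrite /= eqxx.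
have n0 : 0 < #|T| by apply/card_gt0P; exists u.
rewrite /dist; move: n0; case: #|T| => // n _ /=.
by rewrite w0.
Qed.

Lemma Eab_dist (T : finType) (e : rel T) D chi a b h u v :
  Eab e D chi a b h u v -> dist e u v = Some (a + b).
Proof.
case/and5P => _ _ hH /eqP da /eqP db.
by move: hH; rewrite inE da db => /eqP <-.
Qed.

Definition Mc (T : finType) (e : rel T) (D : nat) (chi : T -> nat) a b (c : nat) (h : T) : {set T * T} :=
  if chi h == c then Mx (Eab e D chi a b h) else set0.

Lemma famc (T : finType) (e : rel T) (D : nat) (chi : T -> nat) a b c : 0 < a + b -> \sum_h #|Mc e D chi a b c h| <= 4 * rs_max #|T|.
Proof.
move=> hab; apply: gen4.
- move=> h p q; rewrite /Mc; case: ifP => _; last by rewrite inE.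
  by move=> pM qM; apply: (bm_match (Mx_bm _) pM qM).
- move=> h h' p q r; rewrite /Mc; case: (eqVneq (chi h) c) => hc; last by rewrite inE.
  move=> pM qM; case: (eqVneq (chi h') c) => h'c; last by rewrite inE.
  move=> rM e1 e2.
  have Ep := bm_rel (Mx_bm _) pM; have Eq := bm_rel (Mx_bm _) qM.
  have Er := bm_rel (Mx_bm _) rM.
  have dr := Eab_dist Er.
  case/and5P: Ep => _ _ _ /eqP dpa _; case/and5P: Eq => _ _ _ _ /eqP dqb.
  case/and5P: Er => _ /forallP rain h'H _ _.
  have hH : h \in Hset e r.1 r.2 by rewrite inE dr e1 e2 dpa dqb.
  move/implyP: (rain h') => /(_ h'H) /forallP /(_ h) /implyP /(_ hH).
  by rewrite hc h'c eqxx => /implyP /(_ isT) /eqP.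
- move=> h p; rewrite /Mc; case: ifP => _; last by rewrite inE.
  move=> pM; have := Eab_dist (bm_rel (Mx_bm _) pM).
  move=> H; apply/negP => /eqP ep; move: H; rewrite ep dist_refl => -[] h0.
  by rewrite -h0 in hab.
Qed.

Lemma colsplit (T : finType) (e : rel T) (D : nat) (chi : T -> nat)
  (Hchi : forall x, 1 <= chi x <= D ^ 3) a b : 0 < a + b ->
  \sum_h #|Mx (Eab e D chi a b h)| <= (D ^ 3).+1 * (4 * rs_max #|T|).
Proof.
move=> hab.
have sp : forall h, #|Mx (Eab e D chi a b h)| = \sum_(c < (D ^ 3).+1) #|Mc e D chi a b c h|.
  move=> h; have hc : chi h < (D ^ 3).+1 by rewrite ltnS; case/andP: (Hchi h).
  rewrite (bigD1 (Ordinal hc)) //= /Mc eqxx big1 ?addn0 // => c nc.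
  rewrite -(inj_eq val_inj) /= in nc.
  by rewrite eq_sym (negbTE nc) cards0.
rewrite (eq_bigr _ (fun h _ => sp h)) exchange_big /=.
apply: (@leq_trans (\sum_(c < (D ^ 3).+1) 4 * rs_max #|T|)); first by apply: leq_sum => c _; apply: famc.
by rewrite sum_nat_const card_ord.
Qed.

Lemma natbound (T : finType) (e : rel T) (D : nat) (chi : T -> nat)
  (Hchi : forall x, 1 <= chi x <= D ^ 3)
  (cover : nat -> nat -> T -> {set T} * {set T})
  (Hcov : forall (a b : nat) (h : T), 1 <= a + b <= D ->
        is_min_vcover (Eab e D chi a b h) (cover a b h)) :
  \sum_(v : T) #|Fset D cover v| <=
  \sum_(a < D.+1) \sum_(b < D.+1) ((D ^ 3).+1 * (4 * rs_max #|T|)).*2.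
Proof.
pose K (a b : 'I_D.+1) h v :=
  (1 <= a + b <= D) && (v \in (cover a b h).1 :|: (cover a b h).2).
have s1 : forall v, #|Fset D cover v| <= \sum_h \sum_a \sum_b K a b h v.
  move=> v; rewrite /Fset card_predE; apply: leq_sum => h _.
  apply: leq_trans (exists_le_sum _) _; apply: leq_sum => a _.
  exact: exists_le_sum.
apply: (@leq_trans (\sum_v \sum_h \sum_a \sum_b K a b h v)); first by apply: leq_sum => v _; apply: s1.
rewrite exchange_big /=.
under eq_bigr do rewrite exchange_big /=.
under eq_bigr do under eq_bigr do rewrite exchange_big /=.
rewrite exchange_big /=; apply: leq_sum => a _.
rewrite exchange_big /=; apply: leq_sum => b _.
rewrite /K; case: (boolP (1 <= a + b <= D)) => cnd /=; last first.
  by rewrite big1 // => h _; rewrite big1.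
apply: leq_trans (_ : \sum_h (#|Mx (Eab e D chi a b h)|).*2 <= _).
  apply: leq_sum => h _; rewrite -card_predE.
  have H := Mx_cover (Hcov _ _ _ cnd); rewrite -mul2n.
  have H2 : #|[set p in (cover a b h).1 :|: (cover a b h).2]| <= #|(cover a b h).1| + #|(cover a b h).2|.
    apply: (@leq_trans #|(cover a b h).1 :|: (cover a b h).2|); last exact: (leq_card_setU _ _).1.
    apply: subset_leq_card.
    by apply/subsetP => x; rewrite !inE.
  exact: leq_trans H2 (H h).
rewrite -(big_morph double doubleD double0) leq_double.
  by apply: colsplit; case/andP: cnd.
Qed.

Lemma arith (D r : nat) : 1 <= D ->
  \sum_(a < D.+1) \sum_(b < D.+1) ((D ^ 3).+1 * (4 * r)).*2 <= 64 * D ^ 5 * r.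
Proof.
move=> D1.
rewrite !sum_nat_const !card_ord.
have h1 : D.+1 <= 2 * D by rewrite mul2n -addnn -addn1 leq_add2l.
have h2 : (D ^ 3).+1 <= 2 * D ^ 3 by rewrite mul2n -addnn -addn1 leq_add2l expn_gt0 D1.
have : D.+1 * (D.+1 * ((D ^ 3).+1 * (4 * r)).*2) <= (2 * D) * ((2 * D) * ((2 * D ^ 3) * (4 * r)).*2).
  by rewrite leq_mul // leq_mul // leq_double leq_mul.
move/leq_trans; apply.
rewrite -mul2n.
have -> : D ^ 5 = D * (D * D ^ 3) by rewrite -!expnS.
rewrite !mulnA; apply: eq_leq.
ring.
Qed.

End Helpers.
Import Helpers.

Import Order.TTheory GRing.Theory Num.Theory.
Local Open Scope ring_scope.

Theorem lemma2 :
  exists C : rat,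
  forall (T : finType) (e : rel T), symmetric e -> irreflexive e ->
  forall (D : nat), (1 <= D)%N ->
  forall (chi : T -> nat), (forall x, 1 <= chi x <= D ^ 3)%N ->
  forall (cover : nat -> nat -> T -> {set T} * {set T}),
    (forall (a b : nat) (h : T), (1 <= a + b <= D)%N ->
        is_min_vcover (Eab e D chi a b h) (cover a b h)) ->
    (\sum_(v : T) #|Fset D cover v|)%:R
      <= C * (D ^ 5)%:R * ((#|T| ^ 2)%:R / RS #|T|).
Proof.
exists 64%:R => T e _ _ D D1 chi Hchi cover Hcov.
have nb := leq_trans (Helpers.natbound Hchi Hcov) (@arith D (rs_max #|T|) D1).
case: (posnP #|T|) => n0.
  have s0 : (\sum_v #|Fset D cover v|)%N = 0%N.
    apply: big1 => v _; suff: (0 < #|T|)%N by rewrite n0.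
    by apply/card_gt0P; exists v.
  rewrite s0.
  have z : (#|T| ^ 2)%N = 0%N by rewrite n0.
  rewrite z mul0r mulr0; exact: lexx.
rewrite /RS invf_div.
have xn : ((#|T| ^ 2)%N%:R : rat) != 0 by rewrite pnatr_eq0 -lt0n expn_gt0 n0.
have E : ((#|T| ^ 2)%N%:R : rat) * ((rs_max #|T|)%:R / (#|T| ^ 2)%N%:R) = (rs_max #|T|)%:R.
  by rewrite mulrCA mulfV ?mulr1.
rewrite E.
have E2 : (64 * (D ^ 5)%:R * (rs_max #|T|)%:R : rat) = (64 * D ^ 5 * rs_max #|T|)%N%:R.
  by rewrite !natrM.
by rewrite E2 ler_nat.
Qed.
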